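(* Let $\sigma$ be an erasing $k$-block substitution with $w_\epsilon\ne1^k$ that satisfies the optimality condition. Let $y\in\mathbb I$ be a point with the following property: for each $w\in\{0,1\}^\omega$ with $y=0.w$, the sequence of blocks $(b_i)_{i\ge1}$ with $w=\prod_{i\ge1}\sigma(b_i)$ and $\sigma(b_i)\neq\epsilon$ for all $i$ is unique. If moreover $y$ is not a dyadic rational, then the closure of $f_\sigma^{-1}(y)$ in $\mathbb I$ is a Cantor space, i.e. a nonempty, compact, perfect, totally disconnected (nowhere dense) subset of $\mathbb I$.
   Context: Notation: $\mathbb I=[0,1]$. $\{0,1\}^*$ and $\{0,1\}^\omega$ denote finite and infinite binary words, and $\epsilon$ is the empty word. For a word $w$, set $0.w=\sum_iw_i2^{-i}$. For $x\in(0,1]$, $\widetilde x$ is the unique infinite binary expansion of $x$ not ending in $0^\infty$. Fix $k\ge2$. An erasing $k$-block substitution is a map $\sigma:\{0,1\}^k\to\{0,1\}^*$ with exactly one block $w_\epsilon$ such that $\sigma(w_\epsilon)=\epsilon$. It acts blockwise on infinite words, concatenating the images of consecutive $k$-blocks. The map $f_\sigma:\mathbb I\to\mathbb I$ is defined by $f_\sigma(x)=0.\sigma(\widetilde x)$ if $x\in(0,1]$ and $\widetilde x\neq w_\epsilon^\infty$, and $f_\sigma(x)=0$ otherwise. Optimality condition: every $w\in\{0,1\}^\omega$ can be written as $w=\prod_{i\ge1}\sigma(b_i)$ with blocks $b_i\in\{0,1\}^k$ satisfying $\sigma(b_i)\ne\epsilon$. *)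

(* Defs.v *)
From HB Require Import structures.
From mathcomp Require Import all_boot all_order all_algebra.
From mathcomp Require Import all_classical all_reals all_analysis.
From Stdlib Require Import ClassicalEpsilon.
Set Implicit Arguments. Unset Strict Implicit. Unset Printing Implicit Defensive.
Import Order.TTheory GRing.Theory Num.Theory numFieldNormedType.Exports.
Local Open Scope classical_set_scope.
Local Open Scope ring_scope.

(* Infinite binary words w in {0,1}^omega are functions nat -> bool, with
   (w i) the (i+1)-th letter (true = 1).  Finite words are seq bool. *)

Definition binval {R : realType} (w : nat -> bool) : R :=
  limn (series (fun i : nat => ((w i)%:R / 2 ^+ i.+1 : R))).

Definition ends_in_zeros (w : nat -> bool) : Prop :=
  exists N, forall n, (N <= n)%N -> w n = false.

(* x~ : the unique infinite binary expansion of x not ending in 0^oo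
   (chosen by Hilbert's epsilon; for x in (0,1] it exists and is unique). *)
Definition xtilde {R : realType} (x : R) : nat -> bool :=
  epsilon (inhabits (fun _ => false))
    (fun w => binval w = x /\ ~ ends_in_zeros w).

(* Infinite concatenation prod_{i} u_i of finite words: letter n is the n-th
   letter of the finite prefix u_0 ... u_(m-1) for m large enough; if the
   concatenation is a finite word, it is padded with 0s (which does not change
   its binary value 0.(...)). *)
Definition prefix_cat (u : nat -> seq bool) (m : nat) : seq bool :=
  flatten [seq u i | i <- iota 0 m].

Definition inf_cat (u : nat -> seq bool) : nat -> bool :=
  fun n => `[< exists m, nth false (prefix_cat u m) n = true >].

Definition kblock (k : nat) (w : nat -> bool) (i : nat) : k.-tuple bool :=
  [tuple w (i * k + j)%N | j < k].

Definition subst_word (k : nat) (sigma : k.-tuple bool -> seq bool)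
  (w : nat -> bool) : nat -> bool :=
  inf_cat (fun i => sigma (kblock k w i)).

Definition erasing_subst (k : nat) (sigma : k.-tuple bool -> seq bool)
  (we : k.-tuple bool) : Prop :=
  sigma we = [::] /\ forall b, sigma b = [::] -> b = we.

Definition is_periodic_block (k : nat) (we : k.-tuple bool) (w : nat -> bool)
  : Prop := forall i, kblock k w i = we.

(* f_sigma : I -> I (extended by 0 outside (0,1]) *)
Definition f_sigma {R : realType} (k : nat) (sigma : k.-tuple bool -> seq bool)
  (we : k.-tuple bool) (x : R) : R :=
  if `[< 0 < x <= 1 /\ ~ is_periodic_block we (xtilde x) >]
  then binval (subst_word sigma (xtilde x))
  else 0.

Definition block_decomp (k : nat) (sigma : k.-tuple bool -> seq bool)
  (b : nat -> k.-tuple bool) (w : nat -> bool) : Prop :=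
  (forall i, sigma (b i) <> [::]) /\ inf_cat (fun i => sigma (b i)) = w.

Definition optimal (k : nat) (sigma : k.-tuple bool -> seq bool) : Prop :=
  forall w : nat -> bool, exists b, block_decomp sigma b w.

Definition dyadic_rational {R : realType} (y : R) : Prop :=
  exists (m : int) (n : nat), y = m%:~R / 2 ^+ n.

(* Main.v *)
Require Import Defs.
From HB Require Import structures.
From mathcomp Require Import all_boot all_order all_algebra.
From mathcomp Require Import all_classical all_reals all_analysis.
From mathcomp Require Import zify ring lra.
From Stdlib Require Import ClassicalEpsilon.
Set Implicit Arguments. Unset Strict Implicit. Unset Printing Implicit Defensive.
Import Order.TTheory GRing.Theory Num.Theory numFieldNormedType.Exports.
Local Open Scope classical_set_scope.
Local Open Scope ring_scope.
Section PartA.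
Variable R : realType.

Fixpoint an (w : nat -> bool) n : nat := if n is m.+1 then w m + (an w m).*2 else 0%N.

Lemma an_ext (w1 w2 : nat -> bool) M :
  (forall i, (i < M)%N -> w1 i = w2 i) <-> an w1 M = an w2 M.
Proof.
elim: M => [|M IH] /=; first by split.
split.
  move=> H; rewrite H // (proj1 IH) // => i iM; apply: H; exact: ltnW.
move=> E i; rewrite ltnS leq_eqVlt => /orP[/eqP ->|iM].
  have := congr1 odd E; by rewrite !oddD !odd_double !addbF => /eqP; case: (w1 M); case: (w2 M).
apply: (proj2 IH) => //; have := congr1 half E; by rewrite !half_bit_double.
Qed.

Lemma an_bound w N d :
  (2 ^ d * an w N <= an w (N + d))%N /\ (an w (N + d) + 1 <= 2 ^ d * (an w N + 1))%N.
Proof.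
elim: d => [|d [IH1 IH2]]; first by rewrite addn0 expn0 !mul1n.
rewrite addnS /= expnS -!mulnA; split.
  rewrite -muln2 mulnC; case: (w (N+d)); lia.
rewrite -muln2; case: (w (N+d)); lia.
Qed.

Lemma an_lt w N : (an w N < 2 ^ N)%N.
Proof. have [_ H] := an_bound w 0 N; move: H; rewrite add0n /= muln1; lia. Qed.

Lemma pow2_gt0 n : 0 < (2 : R) ^+ n.
Proof. exact: exprn_gt0. Qed.

Lemma dshift (p n m : nat) : (n <= m)%N ->
  p%:R / 2 ^+ n = (p * 2 ^ (m - n))%:R / 2 ^+ m :> R.
Proof.
move=> nm; rewrite natrM natrX -{2}(subnKC nm) exprD.
have h1 := pow2_gt0 n; have h2 := pow2_gt0 (m - n).
field; apply/andP; split; rewrite gt_eqF //.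
Qed.

Lemma led (p q m : nat) : (p%:R / 2 ^+ m <= q%:R / 2 ^+ m :> R) = (p <= q)%N.
Proof. by rewrite ler_pM2r ?invr_gt0 ?pow2_gt0 // ler_nat. Qed.

Lemma ltd (p q m : nat) : (p%:R / 2 ^+ m < q%:R / 2 ^+ m :> R) = (p < q)%N.
Proof. by rewrite ltr_pM2r ?invr_gt0 ?pow2_gt0 // ltr_nat. Qed.

Lemma series_an (w : nat -> bool) n :
  series (fun i : nat => ((w i)%:R / 2 ^+ i.+1 : R)) n = (an w n)%:R / 2 ^+ n.
Proof.
elim: n => [|n IH]; first by rewrite /series /= big_geq // mul0r.
rewrite seriesSr IH /= natrD -muln2 natrM exprS.
have h := pow2_gt0 n; field; rewrite gt_eqF //.
Qed.

Definition sw (w : nat -> bool) : R ^nat :=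
  series (fun i : nat => ((w i)%:R / 2 ^+ i.+1 : R)).

Lemma sw_E w n : sw w n = (an w n)%:R / 2 ^+ n.
Proof. exact: series_an. Qed.

Lemma sw_nd w : nondecreasing_seq (sw w).
Proof.
apply/nondecreasing_seqP => n; rewrite /sw seriesSr lerDl.
by rewrite divr_ge0 ?ler0n // ltW ?pow2_gt0.
Qed.

Lemma sw_cvg w : cvgn (sw w).
Proof.
apply: nondecreasing_is_cvgn; first exact: sw_nd.
exists 1 => _ [n _ <-]; rewrite sw_E.
apply: (@le_trans _ _ ((2 ^ n)%:R / 2 ^+ n)).
  by rewrite led; apply: ltnW; exact: an_lt.
by rewrite natrX divff // (negbT (gt_eqF (pow2_gt0 n))).
Qed.

Lemma binval_bounds w N :
  (an w N)%:R / 2 ^+ N <= (binval w : R) /\ (binval w : R) <= (an w N + 1)%:R / 2 ^+ N.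
Proof.
split.
  rewrite -sw_E; exact: (nondecreasing_cvgn_le (@sw_nd w) (@sw_cvg w)).
apply: limr_le; first exact: sw_cvg.
near=> n.
have Nn : (N <= n)%N by near: n; exact: nbhs_infty_ge.
rewrite -/(sw w n) sw_E (dshift _ Nn) led.
have [_ H] := an_bound w N (n - N); rewrite subnKC // in H.
rewrite mulnC; lia.
Unshelve. all: by end_near.
Qed.

Lemma pow_inv_le n m : (n <= m)%N -> (2 ^+ m)^-1 <= (2 ^+ n)^-1 :> R.
Proof.
move=> nm; rewrite lef_pV2 ?posrE ?pow2_gt0 //.
by rewrite ler_eXn2l // ltr1n.
Qed.

Lemma small_pow (d : R) : 0 < d -> exists n, (2 ^+ n)^-1 < d.
Proof.
move=> d0; exists (Num.Def.archi_bound d^-1).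
set n := Num.Def.archi_bound _.
have di : 0 <= d^-1 by rewrite invr_ge0 ltW.
have h1 := archi_boundP di.
have h2 : (n%:R : R) < 2 ^+ n by rewrite -natrX ltr_nat ltn_expl.
rewrite -[d in _ < d]invrK ltf_pV2 ?posrE ?pow2_gt0 ?invr_gt0 //.
exact: lt_trans h1 h2.
Qed.

Lemma squeeze (a b : R) N :
  (forall n, (N <= n)%N -> `|a - b| <= (2 ^+ n)^-1) -> a = b.
Proof.
move=> H; apply/eqP; apply: contraT => neq.
have d0 : 0 < `|a - b| by rewrite normr_gt0 subr_eq0.
have [n0 Hn0] := small_pow d0.
have := H (maxn n0 N) (leq_maxr _ _).
have := pow_inv_le (leq_maxl n0 N).
move=> h1 h2; have := le_trans h2 h1; by rewrite leNgt Hn0.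
Qed.

Lemma binval_gt (w : nat -> bool) j N : w j -> (N <= j)%N ->
  (an w N)%:R / 2 ^+ N < (binval w : R).
Proof.
move=> wj Nj; have [h _] := binval_bounds w j.+1.
apply: lt_le_trans h; rewrite (@dshift _ N j.+1) ?ltd; last by apply: leqW.
have [h1 _] := an_bound w N (j - N); rewrite subnKC // in h1.
rewrite /= wj subSn // expnS; lia.
Qed.

Lemma not_ends (w : nat -> bool) N : ~ ends_in_zeros w -> exists j, (N <= j)%N /\ w j.
Proof.
move=> H; apply: contrapT => H2; apply: H; exists N => n Nn.
apply/negbTE/negP => wn; apply: H2; by exists n.
Qed.

Lemma binval_gt' (w : nat -> bool) N : ~ ends_in_zeros w ->
  (an w N)%:R / 2 ^+ N < (binval w : R).
Proof. by move=> /(not_ends N) [j [Nj wj]]; exact: binval_gt wj Nj. Qed.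

Lemma an_diff (w1 w2 : nat -> bool) : w1 <> w2 -> exists M, an w1 M <> an w2 M.
Proof.
move=> ne; have [i hi] : exists i, w1 i <> w2 i.
  apply: contrapT => H; apply: ne; apply: funext => i.
  apply: contrapT => H'; apply: H; by exists i.
exists i.+1 => /(an_ext w1 w2 i.+1).2 /(_ i (ltnSn i)); exact: hi.
Qed.

Lemma binval_inj (w1 w2 : nat -> bool) : ~ ends_in_zeros w1 -> ~ ends_in_zeros w2 ->
  (binval w1 : R) = binval w2 -> w1 = w2.
Proof.
move=> e1 e2 E; apply: contrapT => /an_diff [M hM].
have main : forall v1 v2 : nat -> bool, ~ ends_in_zeros v2 ->
   (an v1 M < an v2 M)%N -> (binval v1 : R) < binval v2.
  move=> v1 v2 e lt; have [_ h1] := binval_bounds v1 M.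
  apply: (le_lt_trans h1); apply: le_lt_trans (binval_gt' M e).
  by rewrite led addn1.
case: (ltngtP (an w1 M) (an w2 M)) => [lt|lt|eq] //.
  by have := main _ _ e2 lt; rewrite E ltxx.
by have := main _ _ e1 lt; rewrite E ltxx.
Qed.

Lemma dyad (p n : nat) : dyadic_rational (p%:R / 2 ^+ n : R).
Proof. by exists (p%:Z), n. Qed.

Lemma binval_inj_nd (w1 w2 : nat -> bool) :
  (binval w1 : R) = binval w2 -> ~ dyadic_rational (binval w1 : R) -> w1 = w2.
Proof.
move=> E nd; apply: contrapT => /an_diff [M hM].
have main : forall v1 v2 : nat -> bool, (binval v1 : R) = binval v2 ->
   (an v1 M < an v2 M)%N -> (binval v1 : R) = (an v1 M + 1)%:R / 2 ^+ M.
  move=> v1 v2 E' lt; have [_ h1] := binval_bounds v1 M.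
  have [h2 _] := binval_bounds v2 M.
  have h3 : (an v1 M + 1)%:R / 2 ^+ M <= (an v2 M)%:R / 2 ^+ M :> R by rewrite led addn1.
  apply/eqP; rewrite eq_le h1 /= E'; exact: le_trans h3 h2.
case: (ltngtP (an w1 M) (an w2 M)) => [lt|lt|eq] //.
  by apply: nd; rewrite (main _ _ E lt); exact: dyad.
by apply: nd; rewrite E (main _ _ (esym E) lt); exact: dyad.
Qed.

Lemma an_zero (w : nat -> bool) M d : (forall n, (M <= n)%N -> w n = false) ->
  an w (M + d) = (2 ^ d * an w M)%N.
Proof.
move=> H; elim: d => [|d IH]; first by rewrite addn0 mul1n.
by rewrite addnS /= H ?leq_addr // IH expnS -muln2; lia.
Qed.

Lemma binval_ev0 (w : nat -> bool) M : (forall n, (M <= n)%N -> w n = false) ->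
  (binval w : R) = (an w M)%:R / 2 ^+ M.
Proof.
move=> H; apply: (@squeeze _ _ M) => n Mn.
have [h1 h2] := binval_bounds w n.
have E : an w n = (an w M * 2 ^ (n - M))%N by rewrite -(subnKC Mn) an_zero // mulnC subnKC.
rewrite (dshift _ Mn) -E.
have E2 : (an w n + 1)%:R / 2 ^+ n = (an w n)%:R / 2 ^+ n + (2 ^+ n)^-1 :> R.
  by rewrite natrD mulrDl mul1r.
rewrite E2 in h2; rewrite ger0_norm ?subr_ge0 //; lra.
Qed.

Section Exist.
Variable x : R.
Hypothesis hx : 0 < x <= 1.

Fixpoint Ax n : nat :=
  if n is m.+1 then (((((Ax m).*2.+1)%:R : R) < x * 2 ^+ m.+1)%R + (Ax m).*2)%N else 0%N.
Definition wx m := (((Ax m).*2.+1)%:R : R) < x * 2 ^+ m.+1.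

Lemma an_wx n : an wx n = Ax n.
Proof. by elim: n => //= n ->. Qed.

Lemma Ax_inv n : (Ax n)%:R < x * 2 ^+ n <= (Ax n + 1)%:R.
Proof.
elim: n => [|n IH]; first by rewrite /= expr0 mulr1 add0n.
rewrite [Ax n.+1]/=.
have E : x * 2 ^+ n.+1 = 2 * (x * 2 ^+ n) by rewrite exprS mulrCA.
move: IH; set X := x * 2 ^+ n; set A := Ax n.
have hA : (A.*2.+1)%:R = 2 * (A%:R) + 1 :> R by rewrite -addn1 -muln2 natrD natrM mulrC.
have hB : (A.*2)%:R = 2 * (A%:R) :> R by rewrite -muln2 natrM mulrC.
have hC : (A + 1)%:R = A%:R + 1 :> R by rewrite natrD.
rewrite E -/X hA hC.
case: (boolP (2 * A%:R + 1 < 2 * X)) => b /andP[h1 h2].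
  rewrite !natrD hB /= ?mulr1n; apply/andP; split; lra.
rewrite !natrD hB /= ?mulr1n ?mulr0n ?add0r; apply/andP; split; lra.
Qed.

Lemma binval_wx : (binval wx : R) = x.
Proof.
apply: (@squeeze _ _ 0) => n _.
have [h1 h2] := binval_bounds wx n.
have [h3 h4] := andP (Ax_inv n).
rewrite an_wx in h1 h2.
have p := pow2_gt0 n.
have q1 : (Ax n)%:R / 2 ^+ n < x by rewrite ltr_pdivrMr.
have q2 : x <= (Ax n + 1)%:R / 2 ^+ n by rewrite ler_pdivlMr.
move: h1 h2 q1 q2; rewrite natrD mulrDl mul1r ler_distl.
move: (invr_gt0 (2 ^+ n : R)); rewrite p => pi; lra.
Qed.

Lemma wx_nends : ~ ends_in_zeros wx.
Proof.
move=> [N H]; set e := x * 2 ^+ N - (Ax N)%:R.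
have e0 : 0 < e by rewrite subr_gt0; case/andP: (Ax_inv N).
have [d hd] := small_pow e0.
have := Ax_inv (N + d); rewrite -an_wx (an_zero d H) an_wx => /andP [_].
rewrite exprD mulrA natrD natrM natrX => h.
have : e * 2 ^+ d <= 1.
  rewrite /e mulrBl; move: h; rewrite [_ * 2 ^+ d]mulrC; lra.
rewrite -ler_pdivlMr ?pow2_gt0 // mul1r leNgt hd //.
Qed.

End Exist.

Lemma xtildeP (x : R) : 0 < x <= 1 ->
  binval (xtilde x) = x /\ ~ ends_in_zeros (xtilde x).
Proof.
move=> hx; rewrite /xtilde.
have := @epsilon_spec _ (inhabits (fun _ : nat => false))
  (fun w : nat -> bool => (binval w : R) = x /\ ~ ends_in_zeros w)
  (ex_intro _ (wx x) (conj (binval_wx hx) (wx_nends hx))).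
by [].
Qed.

Lemma binval_range (u : nat -> bool) : ~ ends_in_zeros u -> 0 < (binval u : R) <= 1.
Proof.
move=> e; apply/andP; split.
  by have := binval_gt' 0 e; rewrite /= mul0r.
by have [_ h] := binval_bounds u 0; rewrite /= expr0 divr1 in h.
Qed.

Lemma xtilde_binval (u : nat -> bool) : ~ ends_in_zeros u -> xtilde (binval u : R) = u.
Proof.
move=> e; have [h1 h2] := xtildeP (binval_range e).
exact: (binval_inj h2 e h1).
Qed.

End PartA.
Section PartB.
Local Open Scope nat_scope.

Lemma prefix_catD (u : nat -> seq bool) m d :
  prefix_cat u (m + d) = prefix_cat u m ++ flatten [seq u i | i <- iota m d].
Proof. by rewrite /prefix_cat iotaD map_cat flatten_cat add0n. Qed.

Lemma prefix_catS (u : nat -> seq bool) m : prefix_cat u m.+1 = prefix_cat u m ++ u m.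
Proof. by rewrite -addn1 prefix_catD /= cats0. Qed.

Lemma prefix_cat_nil0 (u : nat -> seq bool) m d :
  (forall i, (m <= i < m + d)%N -> u i = [::]) -> prefix_cat u (m + d) = prefix_cat u m.
Proof.
elim: d => [|d IH] H; first by rewrite addn0.
rewrite addnS prefix_catS IH; last by move=> i /andP[h1 h2]; apply: H; lia.
by rewrite H ?cats0 //; lia.
Qed.

Lemma prefix_cat_nil (u : nat -> seq bool) m m' : (m <= m')%N ->
  (forall i, (m <= i < m')%N -> u i = [::]) -> prefix_cat u m' = prefix_cat u m.
Proof.
move=> le H; rewrite -(subnKC le); apply: prefix_cat_nil0 => i hi; apply: H.
by rewrite subnKC in hi.
Qed.

Lemma nth_pref (s t : seq bool) n : nth false s n -> nth false (s ++ t) n.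
Proof.
move=> h; rewrite nth_cat; case: ltnP => // hn.
by rewrite nth_default in h.
Qed.

Lemma inf_catP (u : nat -> seq bool) n :
  inf_cat u n <-> exists m, nth false (prefix_cat u m) n.
Proof. rewrite /inf_cat; split => [/asboolP//|h]; by apply/asboolP. Qed.

Lemma inf_cat_eq (u v : nat -> seq bool) :
  (forall m, exists m' t, prefix_cat v m' = prefix_cat u m ++ t) ->
  (forall m, exists m' t, prefix_cat u m' = prefix_cat v m ++ t) ->
  inf_cat u = inf_cat v.
Proof.
move=> H1 H2; apply: funext => n; apply/idP/idP.
  move=> /inf_catP [m hm]; apply/inf_catP; have [m' [t ht]] := H1 m.
  by exists m'; rewrite ht; exact: nth_pref.
move=> /inf_catP [m hm]; apply/inf_catP; have [m' [t ht]] := H2 m.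
by exists m'; rewrite ht; exact: nth_pref.
Qed.

Lemma inf_cat_ev_nil (u : nat -> seq bool) N :
  (forall i, (N <= i)%N -> u i = [::]) ->
  forall n, (size (prefix_cat u N) <= n)%N -> inf_cat u n = false.
Proof.
move=> H n hn; apply/negbTE/negP => /inf_catP [m hm].
have : (n < size (prefix_cat u m))%N by apply: contraTT hm; rewrite -leqNgt => h; rewrite nth_default.
case: (leqP m N) => hmN.
  rewrite -(subnKC hmN) prefix_catD size_cat in hn; move=> h; move: hn; lia.
rewrite (prefix_cat_nil (ltnW hmN)) => [h|i /andP[h1 _]]; last exact: H.
move: hn; lia.
Qed.

Variable k : nat.
Hypothesis k0 : (0 < k)%N.

Definition word_of (B : nat -> k.-tuple bool) : nat -> bool :=
  fun n => nth false (B (n %/ k)) (n %% k).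

Lemma kblock_nth w i j : (j < k)%N -> nth false (kblock k w i) j = w (i * k + j)%N.
Proof. move=> hj; by rewrite /kblock (nth_mktuple _ _ (Ordinal hj)). Qed.

Lemma kblock_word_of B i : kblock k (word_of B) i = B i.
Proof.
apply: eq_from_tnth => j; rewrite tnth_mktuple /word_of.
rewrite divnMDl // modnMDl divn_small // modn_small // addn0.
by rewrite (tnth_nth false).
Qed.

Lemma word_of_kblock w : word_of (kblock k w) = w.
Proof.
apply: funext => n; rewrite /word_of kblock_nth ?ltn_pmod //.
by rewrite -divn_eq.
Qed.

Lemma kblock_eq w1 w2 i : (forall n, (n < i.+1 * k)%N -> w1 n = w2 n) ->
  kblock k w1 i = kblock k w2 i.
Proof.
move=> H; apply: eq_from_tnth => j; rewrite !tnth_mktuple; apply: H.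
rewrite mulSn; have := ltn_ord j; lia.
Qed.

Lemma word_of_eq B1 B2 N : (forall i, (i < N)%N -> B1 i = B2 i) ->
  forall n, (n < N * k)%N -> word_of B1 n = word_of B2 n.
Proof.
move=> H n hn; rewrite /word_of H //; by rewrite ltn_divLR.
Qed.

Lemma nends_blocks w : (forall N, exists i, (N <= i)%N /\ true \in kblock k w i) ->
  ~ ends_in_zeros w.
Proof.
move=> H [M HM]; have [i [hi ht]] := H M.
move: ht => /(nthP false) [j hj].
rewrite size_tuple in hj; rewrite kblock_nth // HM //.
by apply: leq_trans hi _; rewrite -{1}(muln1 i) (leq_trans (leq_mul (leqnn i) k0)) // leq_addr.
Qed.

Lemma blocks_nends w : ~ ends_in_zeros w ->
  forall N, exists i, (N <= i)%N /\ true \in kblock k w i.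
Proof.
move=> H N; apply: contrapT => H2; apply: H; exists (N * k)%N => n hn.
apply/negbTE/negP => wn; apply: H2; exists (n %/ k); split.
  by rewrite leq_divRL.
apply/(nthP false); exists (n %% k); first by rewrite size_tuple ltn_pmod.
by rewrite kblock_nth ?ltn_pmod // -divn_eq.
Qed.

End PartB.

Section Enum.
Local Open Scope nat_scope.
Variable U : nat -> seq bool.
Hypothesis Hinf : forall N, exists i, (N <= i)%N /\ U i != [::].

Lemma exPm m : exists i, (m <= i)%N && (U i != [::]).
Proof. by have [i [h1 h2]] := Hinf m; exists i; rewrite h1 h2. Qed.

Definition nextp m := ex_minn (exPm m).

Lemma nextp_spec m : [/\ (m <= nextp m)%N, U (nextp m) != [::] &
  forall i, (m <= i < nextp m)%N -> U i = [::]].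
Proof.
rewrite /nextp; case: ex_minnP => r /andP[h1 h2] H; split => // i /andP[hi1 hi2].
apply/eqP; apply: contraTT hi2 => ne; rewrite -leqNgt; apply: H; by rewrite hi1.
Qed.

Lemma nextp_uniq m r : (m <= r)%N -> U r != [::] ->
  (forall i, (m <= i < r)%N -> U i = [::]) -> nextp m = r.
Proof.
move=> h1 h2 H; have [s1 s2 s3] := nextp_spec m.
apply/eqP; rewrite eqn_leq; apply/andP; split.
  rewrite leqNgt; apply/negP => lt; move: h2; by rewrite s3 // h1.
rewrite leqNgt; apply/negP => lt; move: s2; by rewrite H // s1.
Qed.

Fixpoint qq n := if n is n'.+1 then (nextp (qq n')).+1 else 0%N.
Definition pos n := nextp (qq n).

Lemma qq_le_pos n : (qq n <= pos n)%N.
Proof. by have [] := nextp_spec (qq n). Qed.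

Lemma pos_lt n : (pos n < pos n.+1)%N.
Proof. by have [] := nextp_spec (qq n.+1). Qed.

Lemma pos_mono m n : (m < n)%N -> (pos m < pos n)%N.
Proof.
elim: n => // n IH; rewrite ltnS leq_eqVlt => /orP[/eqP ->|h]; first exact: pos_lt.
exact: ltn_trans (IH h) (pos_lt n).
Qed.

Lemma pos_ge n : (n <= pos n)%N.
Proof. elim: n => // n IH; exact: leq_ltn_trans IH (pos_lt n). Qed.

Lemma pos_ne n : U (pos n) != [::].
Proof. by have [] := nextp_spec (qq n). Qed.

Lemma pref_pos n : prefix_cat U (qq n) = prefix_cat (fun i => U (pos i)) n.
Proof.
elim: n => // n IH; rewrite [qq n.+1]/= prefix_catS -/(pos n) prefix_catS -IH.
have [s1 _ s3] := nextp_spec (qq n).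
by rewrite (prefix_cat_nil s1 s3).
Qed.

Lemma inf_cat_pos : inf_cat (fun i => U (pos i)) = inf_cat U.
Proof.
apply: inf_cat_eq => m.
  by exists (qq m), [::]; rewrite cats0 pref_pos.
exists m.+1; rewrite -pref_pos [qq m.+1]/= -/(pos m).
have h : (m <= (pos m).+1)%N by apply: leqW; exact: pos_ge.
rewrite -(subnKC h) prefix_catD; by eexists.
Qed.

End Enum.

Section Agree.
Local Open Scope nat_scope.
Variables U Z : nat -> seq bool.
Hypothesis HU : forall N, exists i, (N <= i)%N /\ U i != [::].
Hypothesis HZ : forall N, exists i, (N <= i)%N /\ Z i != [::].
Variable N : nat.
Hypothesis agree : forall i, (i < N)%N -> U i = Z i.

Lemma nextp_agree m : (nextp HU m < N)%N -> nextp HZ m = nextp HU m.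
Proof.
move=> lt; have [s1 s2 s3] := nextp_spec HU m.
apply: nextp_uniq => //; first by rewrite -agree.
move=> i /andP[h1 h2]; rewrite -agree ?s3 ?h1 //; exact: ltn_trans h2 lt.
Qed.

Lemma qq_agree n : (forall j, (j < n)%N -> (pos HU j < N)%N) -> qq HZ n = qq HU n.
Proof.
elim: n => // n IH H /=; rewrite IH; last by move=> j hj; apply: H; exact: ltnW.
by rewrite nextp_agree // H.
Qed.

Lemma pos_agree n0 : pos HU n0 = N -> Z N != [::] -> pos HZ n0 = N.
Proof.
move=> hp hz; rewrite /pos qq_agree; last by move=> j hj; rewrite -hp; exact: pos_mono.
have [s1 s2 s3] := nextp_spec HU (qq HU n0).
apply: nextp_uniq => //; first by rewrite -/(pos HU n0) hp in s1.
move=> i /andP[h1 h2]; rewrite -agree //; apply: s3; rewrite h1 /=.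
by rewrite -/(pos HU n0) hp.
Qed.
End Agree.

Section Main.
Variable R : realType.
Variable k : nat.
Variable sigma : k.-tuple bool -> seq bool.
Variable we : k.-tuple bool.
Variable y : R.
Hypothesis hk : (2 <= k)%N.
Hypothesis hers : erasing_subst sigma we.
Hypothesis hopt : optimal sigma.
Hypothesis hy : y \in `[0, 1].
Hypothesis huniq : forall w : nat -> bool, binval w = y ->
     forall b1 b2 : nat -> k.-tuple bool,
       block_decomp sigma b1 w -> block_decomp sigma b2 w -> b1 = b2.
Hypothesis hnd : ~ dyadic_rational y.

Let k0 : (0 < k)%N. Proof. exact: leq_trans hk. Qed.

Definition S := [set x : R | x \in `[0, 1] /\ f_sigma sigma we x = y].

Definition UU (u : nat -> bool) i := sigma (kblock k u i).

Lemma sig_we : sigma we = [::].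
Proof. by case: hers. Qed.

Lemma sig_ne b : sigma b != [::] -> b != we.
Proof. by apply: contraNN => /eqP ->; rewrite sig_we. Qed.

Lemma ne_sig b : b != we -> sigma b != [::].
Proof. case: hers => _ H; apply: contraNN => /eqP hb; apply/eqP; exact: H. Qed.

Lemma y_ne0 : y <> 0.
Proof. move=> y0; apply: hnd; exists 0%:Z, 0%N; by rewrite y0 mul0r. Qed.

Lemma S_spec x : S x -> [/\ 0 < x <= 1, ~ is_periodic_block we (xtilde x)
  & binval (subst_word sigma (xtilde x)) = y].
Proof.
move=> [_]; rewrite /f_sigma; case: asboolP => [[h1 h2] E|_ E].
  by split.
by exfalso; apply: y_ne0.
Qed.

Lemma S_inf x : S x -> forall N, exists i, (N <= i)%N /\ UU (xtilde x) i != [::].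
Proof.
move=> Sx N; apply: contrapT => H.
have [_ _ E] := S_spec Sx; apply: hnd; rewrite -E.
have H' : forall i, (N <= i)%N -> UU (xtilde x) i = [::].
  move=> i hi; apply/eqP; apply: contraT => ne; exfalso; apply: H; by exists i.
have := inf_cat_ev_nil H'; set M := size _ => ev.
rewrite /subst_word (binval_ev0 R ev); exact: dyad.
Qed.

Lemma S_mem (u : nat -> bool) : ~ ends_in_zeros u -> ~ is_periodic_block we u ->
  binval (subst_word sigma u) = y -> S (binval u).
Proof.
move=> e np E; split.
  have /andP[h1 h2] := binval_range R e; by rewrite in_itv /= h2 ltW.
rewrite /f_sigma xtilde_binval //; case: asboolP => // H; exfalso; apply: H.
by split => //; exact: binval_range.
Qed.


Lemma an_mono_bounds (w : nat -> bool) n m : (n <= m)%N ->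
  (an w n)%:R / 2 ^+ n <= (an w m)%:R / 2 ^+ m :> R /\
  (an w m + 1)%:R / 2 ^+ m <= (an w n + 1)%:R / 2 ^+ n :> R.
Proof.
move=> nm; have [h1 h2] := an_bound w n (m - n); rewrite subnKC // in h1 h2.
rewrite (dshift R (an w n) nm) (dshift R (an w n + 1) nm) !led; split; lia.
Qed.

Lemma close_an (u v : nat -> bool) M : an u M = an v M ->
  `|binval u - binval v| <= (2 ^+ M)^-1 :> R.
Proof.
move=> E; have [h1 h2] := binval_bounds R u M; have [h3 h4] := binval_bounds R v M.
rewrite E natrD mulrDl mul1r in h1 h2; rewrite natrD mulrDl mul1r in h4.
rewrite ler_distl; apply/andP; split; lra.
Qed.

Lemma pow_le_d (d : R) L n : (2 ^+ L)^-1 < d -> (L <= n)%N -> (2 ^+ n)^-1 < d.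
Proof. move=> h ln; exact: le_lt_trans (pow_inv_le R ln) h. Qed.

Lemma notrue_eq (t1 t2 : k.-tuple bool) : true \notin t1 -> true \notin t2 -> t1 = t2.
Proof.
move=> h1 h2; apply: eq_from_tnth => j.
have e1 : tnth t1 j = false by apply/negbTE/negP => h; move: (mem_tnth j t1); rewrite h (negbTE h1).
have e2 : tnth t2 j = false by apply/negbTE/negP => h; move: (mem_tnth j t2); rewrite h (negbTE h2).
by rewrite e1 e2.
Qed.

Lemma exists_c (e d : k.-tuple bool) : exists c : k.-tuple bool, c != e /\ c != d.
Proof.
apply: contrapT => H.
have sub : ([set: k.-tuple bool] \subset [set e; d])%SET.
  apply/fintype.subsetP => c _; rewrite !inE; apply/negPn/negP; rewrite negb_or => /andP[h1 h2].
  by apply: H; exists c; split.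
have := subset_leq_card sub; rewrite cardsT card_tuple card_bool cards2.
have : (2 ^ 2 <= 2 ^ k)%N by rewrite leq_exp2l.
case: (e != d); lia.
Qed.

Lemma S_perfect x : S x -> forall d : R, 0 < d ->
  exists x', [/\ S x', x' != x & `|x - x'| < d].
Proof.
move=> Sx d d0.
have [hx np E] := S_spec Sx.
have [bx nex] := xtildeP hx.
have HU : forall N, exists i, (N <= i)%N /\ UU (xtilde x) i != [::] := S_inf Sx.
move: np E bx nex HU; set u := xtilde x => np E bx nex HU.
have [L hL] := small_pow d0.
set N := pos HU L.
set B' := fun i => if (i < N)%N then kblock k u i else if i == N then we else kblock k u i.-1.
set u' := word_of B'.
have kb' : forall i, kblock k u' i = B' i := kblock_word_of k0 B'.
have neN : kblock k u N != we := sig_ne (pos_ne HU L).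
have Hsub : subst_word sigma u' = subst_word sigma u.
  rewrite /subst_word.
  have -> : (fun i => sigma (kblock k u' i)) = (fun i => sigma (B' i)).
    by apply: funext => i; rewrite kb'.
  have pre : forall m, prefix_cat (fun i => sigma (B' i)) m =
      prefix_cat (UU u) (if (m <= N)%N then m else m.-1).
    elim=> [|m IH]; first by [].
    rewrite prefix_catS IH /B'; case: (ltngtP m N) => h.
    - by rewrite prefix_catS.
    - have hm : m.+1.-1 = m.-1.+1 by lia.
      by rewrite hm prefix_catS.
    - by rewrite sig_we cats0.
  apply: inf_cat_eq => m.
    by exists (if (m <= N)%N then m else m.-1), [::]; rewrite cats0 pre.
  exists (if (m < N)%N then m else m.+1), [::]; rewrite cats0 pre.
  by case: (ltnP m N) => h; [rewrite ltnW | rewrite ifF //; lia].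
have nends' : ~ ends_in_zeros u'.
  apply: (nends_blocks k0) => M; have [i [hi ht]] := blocks_nends k0 nex (M + N).
  exists i.+1; split; first by lia.
  rewrite kb' /B'.
  have -> : (i.+1 < N)%N = false by lia.
  by have -> : (i.+1 == N) = false by apply/eqP; lia.
have np' : ~ is_periodic_block we u'.
  move=> H; move: (H N.+1); rewrite kb' /B'.
  have -> : (N.+1 < N)%N = false by lia.
  have -> : (N.+1 == N) = false by apply/eqP; lia.
  by move=> /= h; move: neN; rewrite h eqxx.
have Sx' : S (binval u') by apply: S_mem => //; rewrite Hsub.
have agree : an u (N * k) = an u' (N * k).
  have H : forall i, (i < N)%N -> kblock k u i = B' i by move=> i hi; rewrite /B' hi.
  apply/an_ext => n hn; by rewrite /u' -(word_of_eq k0 H hn) word_of_kblock.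
exists (binval u'); split => //.
  apply/eqP => Eq.
  have : u' = u by apply: (binval_inj (R := R)) => //; rewrite Eq bx.
  move=> uu; move: (kb' N); rewrite uu /B' ltnn eqxx => h; by move: neN; rewrite h eqxx.
rewrite -{1}bx; apply: le_lt_trans (close_an agree) _.
apply: pow_le_d hL _; apply: leq_trans (pos_ge HU L) _.
by rewrite -/N leq_pmulr.
Qed.


Lemma dist_in (s p A e : R) : A <= s <= A + e -> A <= p <= A + e -> `|s - p| <= e.
Proof. move=> /andP[h1 h2] /andP[h3 h4]; rewrite ler_distl; apply/andP; split; lra. Qed.

Lemma add1d (a n : nat) : (a + 1)%:R / 2 ^+ n = a%:R / 2 ^+ n + (2 ^+ n)^-1 :> R.
Proof. by rewrite natrD mulrDl mul1r. Qed.

Lemma S_gap s : S s -> forall d : R, 0 < d -> exists l r : R,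
  [/\ l < r, (forall p, l < p < r -> `|s - p| < d) & (forall p, l < p < r -> ~ S p)].
Proof.
move=> Ss d d0.
have [hs np E] := S_spec Ss; have [bs nes] := xtildeP hs.
have HU : forall N, exists i, (N <= i)%N /\ UU (xtilde s) i != [::] := S_inf Ss.
move: np E bs nes HU; set u := xtilde s => np E bs nes HU.
have [L hL] := small_pow d0.
set N := pos HU L.
have neN : kblock k u N != we := sig_ne (pos_ne HU L).
have [c [c1 c2]] := exists_c we (kblock k u N).
set B' := fun i => if (i < N)%N then kblock k u i else c.
set v := word_of B'.
have kbv : forall i, kblock k v i = B' i := kblock_word_of k0 B'.
set M := (N.+1 * k)%N.
set a := an v M.
have agree : an u (N * k) = an v (N * k).
  have H : forall i, (i < N)%N -> kblock k u i = B' i by move=> i hi; rewrite /B' hi.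
  apply/an_ext => n hn; by rewrite /v -(word_of_eq k0 H hn) word_of_kblock.
have NM : (N * k <= M)%N by rewrite leq_mul2r leqnSn orbT.
exists (a%:R / 2 ^+ M), ((a + 1)%:R / 2 ^+ M); split.
- by rewrite ltd addn1.
- move=> p /andP[h1 h2].
  have [m1 m2] := an_mono_bounds v NM.
  have [b1 b2] := binval_bounds R u (N * k).
  rewrite agree in b1 b2; rewrite -/a in m1 m2.
  apply: le_lt_trans (pow_le_d hL (_ : (L <= N * k)%N)); last first.
    apply: leq_trans (pos_ge HU L) _; by rewrite -/N leq_pmulr.
  rewrite -bs; apply: (dist_in (A := (an v (N * k))%:R / 2 ^+ (N * k))).
    by rewrite b1 -add1d b2.
  rewrite (le_trans m1 (ltW h1)) -add1d /=.
  exact: le_trans (ltW h2) m2.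
- move=> p /andP[h1 h2] Sp.
  have [hp npz Ez] := S_spec Sp; have [bz nez] := xtildeP hp.
  have HZ : forall N, exists i, (N <= i)%N /\ UU (xtilde p) i != [::] := S_inf Sp.
  move: npz Ez bz nez HZ; set z := xtilde p => npz Ez bz nez HZ.
  have aM : an z M = a.
    have g1 := binval_gt' R M nez.
    have [_ g2] := binval_bounds R z M.
    rewrite bz in g1 g2.
    have : (an z M < a + 1)%N by rewrite -(ltd R _ _ M); exact: lt_trans g1 h2.
    have : (a < an z M + 1)%N by rewrite -(ltd R _ _ M); exact: lt_le_trans h1 g2.
    rewrite !addn1 !ltnS => h4 h3; apply/eqP; by rewrite eqn_leq h3 h4.
  have bits := (an_ext z v M).2 aM.
  have kbz : forall i, (i <= N)%N -> kblock k z i = B' i.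
    move=> i hi; rewrite -kbv; apply: (kblock_eq k0) => n hn; apply: bits.
    apply: leq_trans hn _; by rewrite leq_mul2r ltnS hi orbT.
  have Wz : subst_word sigma z = subst_word sigma u.
    apply: (binval_inj_nd (R := R)); first by rewrite Ez E.
    by rewrite Ez.
  have dU : block_decomp sigma (fun n => kblock k u (pos HU n)) (subst_word sigma u).
    split; first by move=> n; apply/eqP; exact: (pos_ne HU n).
    exact: (inf_cat_pos HU).
  have dZ : block_decomp sigma (fun n => kblock k z (pos HZ n)) (subst_word sigma u).
    split; first by move=> n; apply/eqP; exact: (pos_ne HZ n).
    rewrite -Wz; exact: (inf_cat_pos HZ).
  have eqb := huniq E dU dZ.
  have ag : forall i, (i < N)%N -> UU u i = UU z i.
    move=> i hi; rewrite /UU kbz; [by rewrite /B' hi | exact: ltnW].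
  have hzN : UU z N != [::] by rewrite /UU kbz // /B' ltnn; exact: ne_sig.
  have pz := @pos_agree _ _ HU HZ N ag L (erefl N) hzN.
  have := congr1 (fun f => f L) eqb; rewrite /= pz -/N kbz // /B' ltnn => h.
  by move: c2; rewrite h eqxx.
Qed.


Lemma S_nonempty : exists x, S x.
Proof.
have y01 : 0 < y <= 1.
  move: hy; rewrite in_itv /= => /andP[h1 h2]; rewrite h2 andbT lt_neqAle h1 andbT.
  by apply/eqP => h; apply: y_ne0.
have [by_ ney] := xtildeP y01.
move: by_ ney; set wy := xtilde y => by_ ney.
have [b [bne bcat]] := hopt wy.
set B0 := fun i => if odd i then b i./2 else we.
set u0 := word_of B0.
have kb0 : forall i, kblock k u0 i = B0 i := kblock_word_of k0 B0.
have h2 : forall m, (m.*2.+1)./2 = m.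
  by move=> m; rewrite -[m.*2.+1]/(true + m.*2)%N half_bit_double.
have Hsub : subst_word sigma u0 = wy.
  rewrite /subst_word -bcat.
  have -> : (fun i => sigma (kblock k u0 i)) = (fun i => sigma (B0 i)).
    by apply: funext => i; rewrite kb0.
  have pre : forall m, prefix_cat (fun i => sigma (B0 i)) m.*2 =
      prefix_cat (fun i => sigma (b i)) m.
    elim => // m IH; rewrite doubleS !prefix_catS IH /B0 /= odd_double /= ?uphalf_double ?h2.
    by rewrite sig_we cats0.
  apply: inf_cat_eq => m.
    exists m; rewrite -pre -addnn prefix_catD; by eexists.
  by exists m.*2, [::]; rewrite cats0 pre.
have nends0 : ~ ends_in_zeros u0.
  apply: (nends_blocks k0) => M; case: (boolP (true \in we)) => ht.
    exists M.*2; split; first by rewrite -addnn leq_addr.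
    by rewrite kb0 /B0 odd_double.
  exists M.*2.+1; split; first by rewrite -addnn ltnW // ltnS leq_addr.
  rewrite kb0 /B0 /= odd_double /= ?uphalf_double ?h2.
  apply/negPn/negP => hb; have := bne M; rewrite (notrue_eq hb ht) sig_we; by [].
have np0 : ~ is_periodic_block we u0.
  move=> H; move: (H 1%N); rewrite kb0 /B0 /= => h; apply: (bne 0%N); by rewrite h sig_we.
exists (binval u0); apply: S_mem => //; by rewrite Hsub by_.
Qed.

Lemma ballR (a b e : R) : ball a e b <-> `|a - b| < e.
Proof. by rewrite -ball_normE. Qed.

Lemma closureP (A : set R) t : closure A t -> forall e, 0 < e -> exists s, A s /\ `|t - s| < e.
Proof.
move=> ct e e0; have [s [As bs]] := ct _ (nbhsx_ballx t e e0).
by exists s; split => //; apply/ballR.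
Qed.

Lemma int0 : interior (closure S) = set0.
Proof.
apply/seteqP; split => // z hz; exfalso.
have Cz : closure S z := nbhs_singleton hz.
case/nbhs_ballP: hz => e /= e0 he.
have e20 : 0 < e / 2 by rewrite divr_gt0.
have [s [Ss hs]] := closureP Cz e20.
have [l [r [lr hnear hgap]]] := S_gap Ss e20.
set m := (l + r) / 2.
have hm : l < m < r by rewrite /m; apply/andP; split; lra.
have Cm : closure S m.
  apply: he; apply/ballR; have := hnear _ hm.
  move: hs; set a := z - s; set b := s - m => h1 h2.
  have -> : z - m = a + b by rewrite /a /b; ring.
  apply: le_lt_trans (ler_normD _ _) _; lra.
have rl0 : 0 < (r - l) / 2 by rewrite divr_gt0 // subr_gt0.
have [p [Sp hp]] := closureP Cm rl0.
apply: (hgap p) => //; move: hp; rewrite ltr_distl /m => /andP[a1 a2].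
apply/andP; split; lra.
Qed.


Lemma main_sec : let C := closure S in
  [/\ C !=set0, compact C, perfect_set C, totally_disconnected C & interior C = set0].
Proof.
move=> C.
have cC : closed C by exact: closed_closure.
have CC : C = closure C := (closure_id C).1 cC.
split.
- have [x Sx] := S_nonempty; exists x; exact: subset_closure.
- apply: (subclosed_compact cC (@segment_compact R 0 1)).
  have c01 : closed (`[0, 1] : set R) by apply: interval_closed.
  rewrite ((closure_id _).1 c01); apply: closureS => x [hx _]; exact: hx.
- split => //; apply/seteqP; split.
    by rewrite {2}CC; exact: subset_limit_point.
  move=> t Ct U nU; case/nbhs_ballP: nU => e /= e0 he.
  have e20 : 0 < e / 2 by rewrite divr_gt0.
  have [s [Ss hs]] := closureP Ct e20.
  have [s' [Ss' ne hs']] := S_perfect Ss e20.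
  case: (eqVneq s t) => [st|st].
    exists s'; split.
    + by rewrite -st.
    + exact: subset_closure.
    + apply: he; apply/ballR; rewrite -st; lra.
  exists s; split => //; first exact: subset_closure.
  by apply: he; apply/ballR; lra.
- move=> x Cx; apply/seteqP; split; last first.
    by move=> _ ->; exact: connected_component_refl.
  move=> z Kz; apply: contrapT => nz; move: nz => /eqP nz.
  have II : is_interval (connected_component C x).
    apply/connected_intervalP; exact: component_connected.
  have Kx : connected_component C x x := connected_component_refl Cx.
  have key : forall a b, a < b -> connected_component C x a ->
      connected_component C x b -> False.
    move=> a b ab Ka Kb.
    have : interior C ((a + b) / 2).
      apply/nbhs_ballP; exists ((b - a) / 2) => /=.
        by rewrite divr_gt0 // subr_gt0.
      move=> q /ballR hq; apply: (connected_component_sub (x := x)).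
      apply: (II a b Ka Kb); move: hq; rewrite ltr_distl => /andP[q1 q2].
      apply/andP; split; lra.
    by rewrite int0.
  case: (ltgtP z x) => h.
  + exact: key h Kz Kx.
  + exact: key h Kx Kz.
  + by move: nz; rewrite h eqxx.
- exact: int0.
Qed.

End Main.


Unset Implicit Arguments.

Theorem mainTheorem6 (R : realType) (k : nat) (sigma : k.-tuple bool -> seq bool)
  (we : k.-tuple bool) (y : R) :
  (2 <= k)%N ->
  erasing_subst sigma we ->
  we != [tuple of nseq k true] ->
  optimal sigma ->
  y \in `[0, 1] ->
  (forall w : nat -> bool, binval w = y ->
     forall b1 b2 : nat -> k.-tuple bool,
       block_decomp sigma b1 w -> block_decomp sigma b2 w -> b1 = b2) ->
  ~ dyadic_rational y ->
  let C := closure [set x : R | x \in `[0, 1] /\ f_sigma sigma we x = y] in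
  [/\ C !=set0, compact C, perfect_set C, totally_disconnected C
    & interior C = set0].
Proof.
move=> hk hers _ hopt hy huniq hnd.
exact: (@main_sec R k sigma we y hk hers hopt hy huniq hnd).
Qed.
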